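(* Let $\mathcal{G}$ be a simple temporal clique on $n$ vertices and let $\mathcal{T}^-=(V,E^-_T)$ be obtained by the forward construction (for any choice of the arbitrary choices). Then the number of emitters is at most $n/2$.
   Context: A simple temporal clique is a pair $\mathcal{G}=(G,\lambda)$ where $G=(V,E)$ is the complete graph on a finite set $V$ of $n$ vertices and $\lambda:E\to\mathbb{N}$ assigns to each edge a single integer label such that any two distinct edges sharing an endpoint have different labels; the label of an arc $(x,y)$ is $\lambda(\{x,y\})$. For a vertex $v$, $e^-(v)$ is the edge incident to $v$ with smallest label. Forward construction: let $E^-$ be the set of arcs $(u,v)$ with $\{u,v\}=e^-(v)$, except that if $e^-(u)=e^-(v)=\{u,v\}$ only one of the two arcs $(u,v),(v,u)$ is included (arbitrarily). Initialize $E^-_T:=E^-$. For every vertex $v$ of out-degree at least $2$ in $(V,E^-)$, let $(v,u_1),\dots,(v,u_\ell)$ be its out-arcs in $E^-$, where $(v,u_\ell)$ has the largest label; for each $i<\ell$, if $u_i$ has out-degree $0$ in $(V,E^-)$, replace $(v,u_i)$ by $(u_i,v)$ in $E^-_T$, and otherwise remove $(v,u_i)$ from $E^-_T$. Set $\mathcal{T}^-=(V,E^-_T)$. An emitter is a vertex of out-degree $0$ in $\mathcal{T}^-$. *)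

(* Defs.v *)
From mathcomp Require Import all_boot.
Set Implicit Arguments. Unset Strict Implicit. Unset Printing Implicit Defensive.

(* A simple temporal clique on the finite vertex set V: every pair {x,y} with
   x <> y is an edge, lam x y is its label (lam x x is irrelevant). *)
Definition simple_temporal_clique (V : finType) (lam : V -> V -> nat) : Prop :=
  (forall x y : V, lam x y = lam y x) /\
  (forall x y z : V, x != y -> x != z -> y != z -> lam x y <> lam x z).

Definition emin (V : finType) (lam : V -> V -> nat) (v u : V) : bool :=
  (u != v) && [forall w : V, (w != v) ==> (lam v u <= lam v w)].

(* Em is a valid choice of E^- : arcs (u,v) with {u,v} = e^-(v); for a mutual
   pair (e^-(u) = e^-(v) = {u,v}) exactly one of the two arcs is chosen. *)
Definition Eminus_spec (V : finType) (lam : V -> V -> nat) (Em : rel V) : Prop :=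
  (forall u v : V, Em u v -> emin lam v u) /\
  (forall u v : V, emin lam v u -> ~~ emin lam u v -> Em u v) /\
  (forall u v : V, emin lam v u -> emin lam u v -> (Em u v (+) Em v u)).

Definition outdeg (V : finType) (E : rel V) (x : V) : nat := #|[set y | E x y]|.

Definition last_arc (V : finType) (lam : V -> V -> nat) (Em : rel V) (v u : V) : bool :=
  Em v u && [forall w : V, Em v w ==> (lam v w <= lam v u)].

Definition ET (V : finType) (lam : V -> V -> nat) (Em : rel V) : rel V :=
  fun x y =>
    (Em x y && ((outdeg Em x < 2) || last_arc lam Em x y))
    || [&& Em y x, 2 <= outdeg Em y, ~~ last_arc lam Em y x & outdeg Em x == 0].

Definition emitter (V : finType) (lam : V -> V -> nat) (Em : rel V) (x : V) : bool :=
  outdeg (ET lam Em) x == 0.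

(* Main.v *)
Require Import Defs.
From mathcomp Require Import all_boot.
Set Implicit Arguments. Unset Strict Implicit.

Section L.
Variables (V : finType) (lam : V -> V -> nat) (Em : rel V).

Lemma outdeg0 x : outdeg Em x = 0 -> forall z, ~~ Em x z.
Proof.
move=> /eqP; rewrite /outdeg cards_eq0 => /eqP H z; apply/negP => Hz.
have : z \in [set y | Em x y] by rewrite inE.
by rewrite H inE.
Qed.

Lemma last_exists v z : Em v z -> exists u, last_arc lam Em v u.
Proof.
move=> Hz; case: (arg_maxnP (fun u => lam v u) Hz) => u Hu Hmax.
exists u; rewrite /last_arc Hu /=; apply/forallP => w; apply/implyP => Hw.
exact: Hmax.
Qed.

Lemma emin_exists v : 2 <= #|V| -> exists u, emin lam v u.
Proof.
move=> H2.
have [w Hw] : exists w, w != v.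
  apply/existsP; rewrite -negb_forall; apply/negP => /forallP Hall.
  have : #|V| <= 1.
    rewrite -(card1 v); apply: subset_leq_card; apply/subsetP => y _.
    rewrite inE; have := Hall y; by case: eqP.
  by rewrite leqNgt H2.
case: (arg_minnP (fun u => lam v u) (Hw : (fun w => w != v) w)) => u Hu Hmin.
exists u; rewrite /emin Hu /=; apply/forallP => w'; apply/implyP => Hw'.
exact: Hmin.
Qed.

Definition P y x := Em y x && ((outdeg Em y < 2) || last_arc lam Em y x).

Hypothesis Hcl : simple_temporal_clique lam.
Hypothesis Hspec : Eminus_spec lam Em.
Hypothesis H2 : 2 <= #|V|.

Lemma P_ET y x : P y x -> ET lam Em y x.
Proof. by rewrite /P /ET => ->. Qed.

Lemma Em_neq y x : Em y x -> y != x.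
Proof.
case: Hspec => H1 _ /H1; rewrite /emin => /andP[] ; by rewrite eq_sym.
Qed.

Lemma P_inj y x1 x2 : P y x1 -> P y x2 -> x1 = x2.
Proof.
move=> /andP[E1 C1] /andP[E2 C2].
case: (ltnP (outdeg Em y) 2) => Ho.
  case: (eqVneq x1 x2) => // Hne; exfalso.
  have : 2 <= outdeg Em y.
    rewrite /outdeg (cardsD1 x1) inE E1 add1n ltnS card_gt0.
    apply/set0Pn; exists x2; by rewrite !inE eq_sym Hne E2.
  by rewrite leqNgt Ho.
move: C1 C2; rewrite ltnNge Ho /= /last_arc => /andP[_ /forallP L1] /andP[_ /forallP L2].
have a := implyP (L1 x2) E2; have b := implyP (L2 x1) E1.
case: (eqVneq x1 x2) => // Hne; exfalso.
case: Hcl => _ Hd; apply: (Hd y x1 x2 (Em_neq E1) (Em_neq E2) Hne).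
by apply/eqP; rewrite eqn_leq a b.
Qed.

Lemma emitter_P x : emitter lam Em x -> exists y, P y x.
Proof.
rewrite /emitter => He.
have noET z : ~~ ET lam Em x z.
  apply/negP => Hz; move: He; rewrite /outdeg cards_eq0 => /eqP He.
  have : z \in [set y | ET lam Em x y] by rewrite inE.
  by rewrite He inE.
have Hx0 : outdeg Em x = 0.
  apply/eqP; rewrite /outdeg cards_eq0; apply/eqP/setP => z; rewrite !inE.
  apply/negP => Hz.
  case: (ltnP (outdeg Em x) 2) => Ho.
    by have := noET z; rewrite /ET Hz Ho.
  have [u Hu] := last_exists Hz.
  have := noET u; rewrite /ET Hu orbT.
  by move: Hu => /andP[-> _].
have [u Hu] := emin_exists x H2.
have Eux : Em u x.
  case: Hspec => _ [S2 S3].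
  case Hm: (emin lam u x).
    have := S3 _ _ Hu Hm; by rewrite (negbTE (outdeg0 Hx0 u)) addbF.
  by apply: S2 => //; rewrite Hm.
exists u; rewrite /P Eux /=.
apply/negPn/negP => Hn.
have := noET u; rewrite /ET; move: Hn; rewrite negb_or -leqNgt => /andP[Ho Hl].
by rewrite Eux Ho Hl Hx0 orbT.
Qed.

End L.

Theorem lemma3 (V : finType) (lam : V -> V -> nat) (Em : rel V) :
  2 <= #|V| ->
  simple_temporal_clique lam ->
  Eminus_spec lam Em ->
  2 * #|[set x | emitter lam Em x]| <= #|V|.
Proof.
move=> H2 Hcl Hspec.
set S := [set x | emitter lam Em x].
pose f x := odflt x [pick y | P lam Em y x].
have fP x : x \in S -> P lam Em (f x) x.
  rewrite inE => /(emitter_P Hspec H2) [y Hy].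
  rewrite /f; case: pickP => [z Hz|H] //=.
  by have := H y; rewrite Hy.
have finj : {in S &, injective f}.
  move=> x1 x2 H1 H2' E.
  apply: (P_inj Hcl Hspec (y := f x1)); first exact: fP.
  by rewrite E; exact: fP.
have disj : [disjoint S & f @: S].
  rewrite disjoint_sym disjoint_subset; apply/subsetP => z /imsetP[x Hx ->].
  rewrite !inE /emitter /outdeg cards_eq0; apply/negP => /eqP He.
  have : x \in [set y | ET lam Em (f x) y] by rewrite inE; apply: P_ET; exact: fP.
  by rewrite He inE.
have := leq_card_setU S (f @: S); rewrite disj => -[_ /eqP E].
rewrite card_in_imset // addnn in E.
by rewrite mul2n -E max_card.
Qed.
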